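(* For each $s$ let $\gamma_s:\mathbb N\to\mathbb N$ be any non-decreasing function with $\lambda_s(n)\le \gamma_s(n)\cdot n$ for all $n$. Then for all $n,m\ge1$: (1) for $s\ge1$, $\lambda_s(n,m)\le m-1+\lambda_s(n)$; (2) for $s\ge3$, $\lambda_s(n)\le \gamma_{s-2}(n)\cdot\lambda_s(n,2n-1)$; (3) for $s\ge2$, $\lambda_s(n)\le\gamma_{s-1}(n)\cdot\lambda_s(n,n)$; (4) for $s\ge3$, $\lambda_s(n)\le \gamma_{s-2}(\gamma_s(n))\cdot\lambda_s(n,3n-1)$.
   Context: For $s\ge1$, a sequence contains an alternation of length $s+2$ if there are distinct symbols $a\ne b$ and indices $i_1<\dots<i_{s+2}$ whose entries are alternately $a,b,a,b,\dots$. $\lambda_s(n)$ is the maximum length of a sequence using at most $n$ distinct symbols, with no two consecutive entries equal, containing no alternation of length $s+2$. A block is a sequence of pairwise distinct symbols. $\lambda_s(n,m)$ is the maximum length of a sequence using at most $n$ distinct symbols that contains no alternation of length $s+2$ and can be written as a concatenation of at most $m$ blocks (consecutive equal entries are allowed across block boundaries). *)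

(* Defs.v *)
From mathcomp Require Import all_boot.
Set Implicit Arguments. Unset Strict Implicit. Unset Printing Implicit Defensive.

Definition alternation (a b : nat) (k : nat) : seq nat :=
  mkseq (fun i => if odd i then b else a) k.

Definition has_alternation (k : nat) (S : seq nat) : Prop :=
  exists a b, a != b /\ subseq (alternation a b k) S.

Definition at_most_symbols (n : nat) (S : seq nat) : Prop :=
  size (undup S) <= n.

Definition adjacent_distinct (S : seq nat) : Prop :=
  forall i, i.+1 < size S -> nth 0 S i != nth 0 S i.+1.

(* S is a sequence counted by lambda_s(n) *)
Definition DS_seq (s n : nat) (S : seq nat) : Prop :=
  at_most_symbols n S /\ adjacent_distinct S /\ ~ has_alternation s.+2 S.

Definition m_block (m : nat) (S : seq nat) : Prop :=
  exists bs : seq (seq nat), size bs <= m /\ all uniq bs /\ S = flatten bs.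

(* S is a sequence counted by lambda_s(n,m) *)
Definition DS_block_seq (s n m : nat) (S : seq nat) : Prop :=
  at_most_symbols n S /\ ~ has_alternation s.+2 S /\ m_block m S.

(* Main.v *)
Require Import Defs.
From mathcomp Require Import all_boot.
From mathcomp Require Import zify.
Set Implicit Arguments. Unset Strict Implicit. Unset Printing Implicit Defensive.

Lemma altS a b k : alternation a b k.+1 = a :: alternation b a k.
Proof.
rewrite /alternation /mkseq /=; congr (_ :: _).
rewrite -[1]addn0 iotaDl -map_comp; apply: eq_map => i /=; by case: (odd i).
Qed.

Lemma altR a b k : alternation a b k.+1 = rcons (alternation a b k) (if odd k then b else a).
Proof. by rewrite /alternation mkseqS. Qed.

Lemma alt_mem a b k : 2 <= k -> (a \in alternation a b k) && (b \in alternation a b k).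
Proof.
case: k => [|[|k]] // _; rewrite !altS !inE !eqxx /=; by rewrite orbT.
Qed.

Lemma subseq_rcons2 (u P : seq nat) e c :
  subseq (rcons u e) (rcons P c) -> subseq u P /\ (e != c -> subseq (rcons u e) P).
Proof.
rewrite -subseq_rev !rev_rcons /=; case: eqP => [-> H|/eqP ne H].
  by rewrite subseq_rev in H; split => //; rewrite eqxx.
have H' : subseq (rcons u e) P by rewrite -subseq_rev rev_rcons.
split => // ; exact: subseq_trans (subseq_rcons u e) H'.
Qed.

Lemma ext_end (u P R : seq nat) e c d :
  subseq (rcons u e) (rcons P c) -> e != d -> d \in c :: R ->
  subseq (rcons (rcons u e) d) (rcons P c ++ R).
Proof.
move=> H ed; rewrite inE; case dR: (d \in R).
  by rewrite orbT => _; rewrite -cats1; apply: cat_subseq => //; rewrite sub1seq.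
rewrite orbF => /eqP dc; subst d.
have ec : e != c by move: ed; case: eqP => // ->.
have [_ /(_ ec) H2] := subseq_rcons2 H.
apply: subseq_trans (prefix_subseq _ _).
by rewrite -subseq_rev !rev_rcons /= eqxx -rev_rcons subseq_rev.
Qed.

Lemma piece1 s B O c R : 2 <= s ->
  ~ has_alternation s.+2 (B ++ O ++ c :: R) -> {subset O <= c :: R} ->
  ~ has_alternation s.+1 (rcons O c).
Proof.
move=> hs NA HO [x [y [xy H]]]; apply: NA; exists x, y; split => //.
have H' := H; rewrite altR in H'.
have [H1 _] := subseq_rcons2 H'.
have /andP [xA yA] := alt_mem x y hs.
have xO := mem_subseq H1 xA; have yO := mem_subseq H1 yA.
have H3 : subseq (rcons (rcons (alternation x y s) (if odd s then y else x)) (if odd s.+1 then y else x)) (rcons O c ++ R).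
  apply: ext_end => //.
    by rewrite /=; case: (odd s) => //=; rewrite eq_sym.
  by case: (odd s.+1); apply: HO.
rewrite -altR -altR in H3.
apply: subseq_trans H3 _; rewrite cat_rcons; exact: suffix_subseq.
Qed.

Lemma piece2 s B O c R : 3 <= s ->
  ~ has_alternation s.+2 (B ++ O ++ c :: R) -> {subset O <= B} -> {subset O <= c :: R} ->
  ~ has_alternation s (rcons O c).
Proof.
case: s => // s hs NA HB HO [x [y [xy H]]]; apply: NA; exists y, x; split; first by rewrite eq_sym.
have H' := H; rewrite altR in H'.
have [H1 _] := subseq_rcons2 H'.
have /andP [xA yA] := alt_mem x y hs.
have xO := mem_subseq H1 xA; have yO := mem_subseq H1 yA.
have Hy : subseq (y :: alternation x y s.+1) (rcons (B ++ O) c).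
  rewrite rcons_cat -[y :: _]cat1s; apply: cat_subseq => //.
  by rewrite sub1seq HB.
rewrite -altS altR in Hy.
have H3 : subseq (rcons (rcons (alternation y x s.+1) (if odd s.+1 then x else y)) (if odd s.+2 then x else y)) (rcons (B ++ O) c ++ R).
  apply: ext_end => //.
    by rewrite /=; case: (odd s) => //=; rewrite eq_sym.
  by case: (odd s.+2); apply: HO.
rewrite -altR -altR in H3.
by rewrite cat_rcons -catA in H3.
Qed.

Lemma split_ex k B R : 0 < k -> R != [::] ->
  exists (O : seq nat) (c : nat) (R2 : seq nat), [/\ R = O ++ c :: R2, {subset O <= B}, {subset O <= c :: R2},
    size O < k & [|| c \notin B ++ O, c \notin R2 | size O == k.-1]].
Proof.
elim: R B k => // x R' IH B k k0 _.
case E: [|| x \notin B, x \notin R' | k == 1].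
  exists [::], x, R'; split => //.
  rewrite cats0; by case/or3P: E => [->|->|/eqP ->]; rewrite ?orbT.
move/negbT: E; rewrite !negb_or !negbK => /and3P [xB xR k1].
have k0' : 0 < k.-1 by case: k k0 k1 => [|[|k]].
have Rn : R' != [::] by case: R' xR IH.
have [O' [c [R2 [E1 E2 E3 E4 E5]]]] := IH (rcons B x) k.-1 k0' Rn.
exists (x :: O'), c, R2; split.
- by rewrite E1.
- move=> z; rewrite inE => /orP [/eqP -> //|/E2]; rewrite mem_rcons inE.
  by case/orP => [/eqP ->|].
- move=> z; rewrite inE => /orP [/eqP ->|/E3 //].
  by move: xR; rewrite E1 mem_cat => /orP [/E3|].
- by rewrite /=; lia.
- move: E5; rewrite cat_rcons /=.
  case/or3P => [->|->|/eqP h] //; rewrite ?orbT //; apply/or3P; apply: Or33; apply/eqP; lia.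
Qed.

Definition mu (B R : seq nat) :=
  size (undup R) + size (undup [seq x <- R | x \notin B]).

Lemma undup_sub_le (A C : seq nat) : {subset A <= C} -> size (undup A) <= size (undup C).
Proof.
move=> H; apply: uniq_leq_size; first exact: undup_uniq.
by move=> z; rewrite !mem_undup => /H.
Qed.

Lemma undup_sub_lt (A C : seq nat) z : {subset A <= C} -> z \in C -> z \notin A ->
  size (undup A) < size (undup C).
Proof.
move=> H zC zA; have: size (z :: undup A) <= size (undup C).
  apply: uniq_leq_size; first by rewrite /= mem_undup zA undup_uniq.
  by move=> w; rewrite inE mem_undup => /orP [/eqP ->|/H]; rewrite mem_undup.
by [].
Qed.


Lemma mu_step B O c R2 (R := O ++ c :: R2) :
  mu (B ++ rcons O c) R2 <= mu B R /\
  ((c \notin B ++ O) || (c \notin R2) -> mu (B ++ rcons O c) R2 < mu B R).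
Proof.
have s1 : {subset R2 <= R} by move=> z zR; rewrite /R mem_cat inE zR !orbT.
have s2 : {subset [seq x <- R2 | x \notin B ++ rcons O c] <= [seq x <- R | x \notin B]}.
  move=> z; rewrite !mem_filter mem_cat negb_or => /andP [/andP [zB _] zR].
  by rewrite zB s1.
have l1 := undup_sub_le s1; have l2 := undup_sub_le s2.
rewrite /mu; split; first exact: leq_add.
case/orP => H.
- have : size (undup [seq x <- R2 | x \notin B ++ rcons O c]) < size (undup [seq x <- R | x \notin B]).
    apply: (undup_sub_lt s2 (z := c)).
      by rewrite mem_filter /R mem_cat inE eqxx orbT andbT; move: H; rewrite mem_cat negb_or => /andP [].
    by rewrite mem_filter mem_cat mem_rcons inE eqxx !orbT.
  by move=> h; lia.
- have : size (undup R2) < size (undup R).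
    by apply: (undup_sub_lt s1 (z := c)) => //; rewrite /R mem_cat inE eqxx orbT.
  by move=> h; lia.
Qed.

Lemma glob (S : seq nat) (B0 : seq nat) k G (Hk : 0 < k)
  (HP : forall P O c R2, S = P ++ O ++ c :: R2 -> {subset O <= B0 ++ P} -> {subset O <= c :: R2} ->
        size O < k -> size (rcons O c) <= G * size (undup (rcons O c))) :
  forall R P, S = P ++ R -> exists bs : seq (seq nat),
    [/\ all uniq bs, subseq (flatten bs) R, k * size bs <= k * mu (B0 ++ P) R + size R &
        size R <= G * size (flatten bs)].
Proof.
move=> R; have [N] := ubnP (size R); elim: N R => // N IH R szR P SE.
case: (eqVneq R [::]) => [->|Rn]; first by exists [::]; split; rewrite //= ?muln0.
have [O [c [R2 [E1 E2 E3 E4 E5]]]] := split_ex (B0 ++ P) Hk Rn.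
have SE' : S = (P ++ rcons O c) ++ R2 by rewrite SE E1 -catA cat_rcons.
have sz2 : size R2 < N.
  by move: szR; rewrite E1 size_cat /=; lia.
have [bs [U1 U2 U3 U4]] := IH R2 sz2 (P ++ rcons O c) SE'.
have [M1 M2] := mu_step (B0 ++ P) O c R2.
rewrite catA in U3.
set B := B0 ++ P in M1 M2 U3 E5 *.
exists (undup (rcons O c) :: bs); split.
- by rewrite /= undup_uniq.
- by rewrite E1 -cat_rcons /=; apply: cat_subseq => //; exact: undup_subseq.
- rewrite -E1 in M1 M2; rewrite /=.
  case/or3P: E5 => [h|h|/eqP h].
  + have := M2 (introT orP (or_introl h)).
    move=> lt; have: k * (mu (B ++ rcons O c) R2).+1 <= k * mu B R by rewrite leq_mul2l lt orbT.
    have : size R2 <= size R by rewrite E1 size_cat /=; lia.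
    nia.
  + have := M2 (introT orP (or_intror h)).
    move=> lt; have: k * (mu (B ++ rcons O c) R2).+1 <= k * mu B R by rewrite leq_mul2l lt orbT.
    have : size R2 <= size R by rewrite E1 size_cat /=; lia.
    nia.
  + have : size R = k + size R2 by rewrite E1 size_cat /= h; lia.
    have : k * mu (B ++ rcons O c) R2 <= k * mu B R by rewrite leq_mul2l M1 orbT.
    nia.
- have HPi : S = P ++ O ++ c :: R2 by rewrite SE E1.
  have := HP P O c R2 HPi E2 E3 E4.
  rewrite E1 -cat_rcons /= !size_cat mulnDr; lia.
Qed.

Fixpoint adjb (S : seq nat) : bool :=
  if S is x :: t then (if t is y :: _ then (x != y) && adjb t else true) else true.

Lemma adjP S : adjacent_distinct S <-> adjb S.
Proof.
elim: S => [|x t IH]; first by split => // _ i.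
split.
- move=> H; have Ht : adjacent_distinct t by move=> i hi; exact: (H i.+1).
  move/IH: Ht => Ht; case: t H Ht {IH} => //= y t H ->; rewrite andbT.
  by have := H 0 isT.
- move=> H i; case: i => [|i] /=.
    by case: t H {IH} => //= y t /andP [].
  move=> hi; have : adjb t by case: t H {IH} hi => //= y t /andP [].
  by move/IH; apply.
Qed.

Lemma adjb_catr A C : adjb (A ++ C) -> adjb C.
Proof.
elim: A => // a A IH H; apply: IH; move: H => /=; case: (A ++ C) => // y l /andP [].
by [].
Qed.

Lemma adjb_catl A C : adjb (A ++ C) -> adjb A.
Proof.
elim: A => // a A IH /=; case: A IH => //= y l IH /andP [-> /IH] //.
Qed.

Lemma adj_infix B I R : adjacent_distinct (B ++ I ++ R) -> adjacent_distinct I.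
Proof. by move/adjP/adjb_catr/adjb_catl/adjP. Qed.

Lemma atmost_sub (A C : seq nat) : subseq A C -> size (undup A) <= size (undup C).
Proof. by move/mem_subseq; exact: undup_sub_le. Qed.

Lemma noalt_sub k (A C : seq nat) : subseq A C -> ~ has_alternation k C -> ~ has_alternation k A.
Proof. move=> H N [a [b [ab H2]]]; apply: N; exists a, b; split => //; exact: subseq_trans H2 H. Qed.

Fixpoint ddf (p : nat) (t : seq nat) : seq nat :=
  if t is y :: t' then (if y == p then ddf p t' else y :: ddf y t') else [::].
Fixpoint eqpf (p : nat) (t : seq nat) : nat :=
  if t is y :: t' then (y == p) + eqpf y t' else 0.

Lemma ddf_adj t p : adjb (p :: ddf p t).
Proof.
elim: t p => // y t IH p /=; case: eqP => [_|/eqP yp]; first exact: IH.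
by rewrite /= eq_sym yp; exact: IH.
Qed.

Lemma ddf_sub t p : subseq (p :: ddf p t) (p :: t).
Proof.
elim: t p => // y t IH p.
have -> : ddf p (y :: t) = if y == p then ddf p t else y :: ddf y t by [].
case: eqVneq => [->|yp].
  apply: subseq_trans (IH p) _; exact: (suffix_subseq [:: p] (p :: t)).
rewrite -[p :: y :: ddf y t]cat1s -[p :: y :: t]cat1s; exact: cat_subseq.
Qed.

Lemma ddf_size t p : size t = size (ddf p t) + eqpf p t.
Proof.
elim: t p => // y t IH p.
have -> : ddf p (y :: t) = if y == p then ddf p t else y :: ddf y t by [].
have -> : eqpf p (y :: t) = (y == p) + eqpf y t by [].
case: eqVneq => [->|yp] /=; [rewrite ?eqxx (IH p) | rewrite ?(negbTE yp) (IH y) /=]; lia.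
Qed.

Definition eqp (T : seq nat) := if T is x :: t then eqpf x t else 0.

Lemma eqp_cat A C : eqp (A ++ C) <= eqp A + eqp C + 1.
Proof.
case: A => [|a A] /=; first lia.
elim: A a => [|a' A IH] a /=.
  by case: C => //= c C; case: (c == a) => /=; lia.
have := IH a'; lia.
Qed.

Lemma eqp_uniq A : uniq A -> eqp A = 0.
Proof.
case: A => // a A; elim: A a => // a' A IH a /= /andP [].
rewrite inE negb_or => /andP [aa _] u; rewrite eq_sym (negbTE aa) /=; exact: IH.
Qed.

Lemma eqp_flatten bs : all uniq bs -> eqp (flatten bs) <= (size bs).-1.
Proof.
elim: bs => // b bs IH /= /andP [ub ubs].
case: bs IH ubs => [|b' bs] IH ubs /=; first by rewrite cats0 eqp_uniq.
have := eqp_cat b (flatten (b' :: bs)); rewrite (eqp_uniq ub) => h.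
have := IH ubs; move: h; rewrite /=; lia.
Qed.

Lemma filter_sub_nil (A C : seq nat) : {subset A <= C} -> [seq x <- A | x \notin C] = [::].
Proof.
elim: A => // a A IH H /=; rewrite H ?inE ?eqxx //=; apply: IH => z zA; apply: H.
by rewrite inE zA orbT.
Qed.

Lemma infix_sub (P I R : seq nat) : subseq I (P ++ I ++ R).
Proof. exact: subseq_trans (prefix_subseq I R) (suffix_subseq P _). Qed.

Unset Implicit Arguments.
Theorem lemma1 (gamma : nat -> nat -> nat)
  (Hmono : forall s, {homo gamma s : x y / x <= y})
  (Hgamma : forall s n S, 1 <= s -> DS_seq s n S -> size S <= gamma s n * n)
  (n m : nat) (Hn : 1 <= n) (Hm : 1 <= m) :
  (forall s, 1 <= s -> forall T, DS_block_seq s n m T ->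
     exists S, DS_seq s n S /\ size T <= m - 1 + size S) /\
  (forall s, 3 <= s -> forall S, DS_seq s n S ->
     exists T, DS_block_seq s n (2 * n - 1) T /\
       size S <= gamma (s - 2) n * size T) /\
  (forall s, 2 <= s -> forall S, DS_seq s n S ->
     exists T, DS_block_seq s n n T /\
       size S <= gamma (s - 1) n * size T) /\
  (forall s, 3 <= s -> forall S, DS_seq s n S ->
     exists T, DS_block_seq s n (3 * n - 1) T /\
       size S <= gamma (s - 2) (gamma s n) * size T).
Proof.
have gpos : forall s' N, 1 <= s' -> 1 <= N -> 0 < gamma s' N.
  move=> s' N h1 h2.
  have DS : DS_seq s' N [:: 0].
    split; first by rewrite /at_most_symbols.
    split; first by move=> [|i].
    move=> [a [b [_ H]]]; have := size_subseq H; rewrite size_mkseq /=; lia.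
  have := Hgamma s' N [:: 0] h1 DS; rewrite /=; case: (gamma s' N) => //.
have two : forall s, 3 <= s -> forall S, DS_seq s n S -> forall k G, 0 < k -> 0 < G ->
  (forall I, DS_seq (s-2) (size (undup I)) I -> size I <= k -> size (undup I) <= n ->
     size I <= G * size (undup I)) ->
  exists bs : seq (seq nat), [/\ all uniq bs, subseq (flatten bs) S,
     k * size bs <= k * (2*n-1) + size S & size S <= G * size (flatten bs)].
  move=> s hs S [HS1 [HS2 HS3]] k G k0 G0 HP.
  case: S HS1 HS2 HS3 => [|s0 [|s1 R']] HS1 HS2 HS3.
  - by exists [::]; split; rewrite //= muln0.
  - exists [:: [:: s0]]; split; [done | exact: subseq_refl | rewrite /=; nia | rewrite /=; nia].
  have s01 : s0 != s1 by have := HS2 0 isT.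
  have HP2 : forall P O c R2, s0 :: s1 :: R' = P ++ O ++ c :: R2 -> {subset O <= [::] ++ P} ->
      {subset O <= c :: R2} -> size O < k -> size (rcons O c) <= G * size (undup (rcons O c)).
    move=> P O c R2 SE HB HO hk.
    have SE' : s0 :: s1 :: R' = P ++ rcons O c ++ R2 by rewrite SE cat_rcons.
    have NA0 : ~ has_alternation s.+2 (P ++ O ++ c :: R2) by rewrite -SE.
    have NA := @piece2 s P O c R2 hs NA0 HB HO.
    apply: HP.
    + split; first exact: leqnn. split; first by apply: (@adj_infix P _ R2); rewrite -SE'.
      by have -> : (s - 2).+2 = s by lia.
    + by rewrite size_rcons.
    + apply: (leq_trans _ HS1); apply: atmost_sub; rewrite SE'; exact: infix_sub.
  have [bs [U1 U2 U3 U4]] := glob k0 HP2 (R := R') (P := [:: s0; s1]) erefl.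
  have Hmu : mu ([::] ++ [:: s0; s1]) R' <= 2 * n - 2.
    rewrite /mu.
    have a1 : size (undup R') <= n.
      apply: (leq_trans _ HS1); apply: undup_sub_le => z zR; by rewrite !inE zR !orbT.
    have a2 : size (s0 :: s1 :: undup [seq x <- R' | x \notin [::] ++ [:: s0; s1]]) <= n.
      apply: (leq_trans _ HS1); apply: uniq_leq_size.
        rewrite /= !inE !mem_undup !mem_filter !inE !eqxx /= !negb_or s01 undup_uniq.
        by rewrite andbF.
      move=> z; rewrite mem_undup !inE mem_undup mem_filter => /or3P [/eqP->|/eqP->|/andP [_ ->]]; rewrite ?eqxx ?orbT //.
    move: a2; rewrite /= => h; have -> : 2 * n - 2 = n + (n - 2) by lia.
    apply: leq_add; first exact: a1. lia.
  exists ([:: s0; s1] :: bs); split.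
  - by rewrite /= inE s01 U1.
  - have -> : flatten ([:: s0; s1] :: bs) = [:: s0; s1] ++ flatten bs by [].
    have -> : [:: s0, s1 & R'] = [:: s0; s1] ++ R' by [].
    exact: cat_subseq (subseq_refl _) U2.
  - have : k * mu ([::] ++ [:: s0; s1]) R' <= k * (2 * n - 2) by rewrite leq_mul2l Hmu orbT.
    move: U3; rewrite /=; nia.
  - move: U4; rewrite /=; nia.
split.
  move=> s hs T [HT1 [HT2 [bs [Hbs1 [Hbs2 Hbs3]]]]].
  case: T HT1 HT2 Hbs3 => [|x t] HT1 HT2 Hbs3.
    by exists [::]; split => //; split => //; split => // i.
  exists (x :: ddf x t).
  have sub := ddf_sub t x.
  split.
    split; first exact: leq_trans (atmost_sub sub) HT1.
    split; first by apply/adjP; exact: ddf_adj.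
    exact: noalt_sub sub HT2.
  have e1 := ddf_size t x.
  have e2 : eqpf x t <= (size bs).-1 by have := eqp_flatten Hbs2; rewrite -Hbs3.
  rewrite /= e1; lia.
split.
  move=> s hs S HS.
  have [bs [U1 U2 U3 U4]] := two s hs S HS (size S).+1 (gamma (s-2) n) isT (gpos (s-2) n (ltac:(lia)) Hn)
    (fun I DI _ dn => leq_trans (Hgamma (s-2) _ I (ltac:(lia)) DI) (leq_mul (Hmono _ _ _ dn) (leqnn _))).
  exists (flatten bs); split => //.
  case: HS => [HS1 [HS2 HS3]].
  split; first exact: leq_trans (atmost_sub U2) HS1.
  split; first exact: noalt_sub U2 HS3.
  exists bs; split; [nia | by split].
split.
  move=> s hs S [HS1 [HS2 HS3]].
  set G := gamma (s - 1) n.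
  have HP : forall P O c R2, S = P ++ O ++ c :: R2 -> {subset O <= S ++ P} ->
      {subset O <= c :: R2} -> size O < (size S).+1 -> size (rcons O c) <= G * size (undup (rcons O c)).
    move=> P O c R2 SE _ HO _.
    have SE' : S = P ++ rcons O c ++ R2 by rewrite SE cat_rcons.
    have NA0 : ~ has_alternation s.+2 (P ++ O ++ c :: R2) by rewrite -SE.
    have NA := @piece1 s P O c R2 hs NA0 HO.
    have dn : size (undup (rcons O c)) <= n.
      apply: (leq_trans _ HS1); apply: atmost_sub; rewrite [in X in subseq _ X]SE'; exact: infix_sub.
    have DI : DS_seq (s - 1) (size (undup (rcons O c))) (rcons O c).
      split; first exact: leqnn. split; first by apply: (@adj_infix P _ R2); rewrite -SE'.
      by have -> : (s - 1).+2 = s.+1 by lia.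
    exact: leq_trans (Hgamma (s-1) _ _ (ltac:(lia)) DI) (leq_mul (Hmono _ _ _ dn) (leqnn _)).
  have [bs [U1 U2 U3 U4]] := glob (ltn0Sn _) HP (R := S) (P := [::]) erefl.
  rewrite cats0 /mu filter_sub_nil // addn0 in U3.
  exists (flatten bs); split => //.
  split; first exact: leq_trans (atmost_sub U2) HS1.
  split; first exact: noalt_sub U2 HS3.
  exists bs; split; [apply: (leq_trans _ HS1); nia | by split].
move=> s hs S HS.
set N := gamma s n.
have N0 : 0 < N by apply: gpos => //; lia.
have HSN : size S <= N * n by apply: Hgamma => //; lia.
have [bs [U1 U2 U3 U4]] := two s hs S HS N (gamma (s-2) N) N0 (gpos (s-2) N (ltac:(lia)) N0)
  (fun I DI hk _ => leq_trans (Hgamma (s-2) _ I (ltac:(lia)) DI)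
     (leq_mul (Hmono _ _ _ (leq_trans (size_undup I) hk)) (leqnn _))).
exists (flatten bs); split => //.
case: HS => [HS1 [HS2 HS3]].
split; first exact: leq_trans (atmost_sub U2) HS1.
split; first exact: noalt_sub U2 HS3.
exists bs; split; [nia | by split].
Qed.
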